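(* For each $i\ge1$ let $f_i$ be a non-negative completely multiplicative function with $f_i(p) < 1$ for every prime $p$, and let $y_i \to \infty$ be a sequence of parameters. Define $\alpha_i = \frac{(\log \log y_i)^2}{\log y_i}$. Suppose that for all $i$ \[ \sum_p \log p\, \frac{f_i(p)}{1-f_i(p)} < \log y_i - \frac{\log y_i}{\log \log y_i}\] and that \[\sum_{\substack{p,\,k\ge1\\ k \log p > \log y_i/(\log \log y_i)^4}} f_i(p)^k p^{k\alpha_i} = o(1), \qquad i \to \infty,\] the sums being over primes $p$. Then \[\sum_{n \leq y_i} f_i(n) = (1 + o(1)) \sum_{n = 1}^\infty f_i(n), \qquad i \to \infty.\] *)

(* Defs.v *)
From HB Require Import structures.
From mathcomp Require Import all_boot all_order all_algebra.
From mathcomp Require Import all_classical all_reals all_analysis.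
Set Implicit Arguments. Unset Strict Implicit. Unset Printing Implicit Defensive.
Import Order.TTheory GRing.Theory Num.Theory.
Local Open Scope ring_scope.

Definition completely_multiplicative (R : realType) (f : nat -> R) : Prop :=
  f 1%N = 1 /\ forall m n : nat, (0 < m)%N -> (0 < n)%N -> f (m * n)%N = f m * f n.

Definition alpha_param (R : realType) (y : R) : R := (ln (ln y)) ^+ 2 / ln y.

(* Main.v *)
Require Import Defs.
From HB Require Import structures.
From mathcomp Require Import all_boot all_order all_algebra.
From mathcomp Require Import all_classical all_reals all_analysis.
From mathcomp Require Import ring lra.
Import Order.TTheory GRing.Theory Num.Theory.
Import numFieldNormedType.Exports.
Local Open Scope classical_set_scope.

Definition rng (K : nat) := iota 0 K.+1.
Lemma mem_rng K k : (k \in rng K) = (k <= K).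
Proof. by rewrite mem_iota add0n ltnS. Qed.
Lemma rng_uniq K : uniq (rng K). Proof. exact: iota_uniq. Qed.
Arguments rng : simpl never.
Fixpoint Nset (ps : seq nat) (K : nat) : seq nat :=
  match ps with
  | [::] => [:: 1%N]
  | p :: ps' => [seq (p ^ k * m)%N | k <- rng K, m <- Nset ps' K]
  end.
Lemma Nset_cons p ps K : Nset (p :: ps) K =
  [seq (p ^ k * m)%N | k <- rng K, m <- Nset ps K].
Proof. by []. Qed.
Lemma Nset_nil K : Nset [::] K = [:: 1%N].
Proof. by []. Qed.
Arguments Nset : simpl never.

Lemma Nset_gt0 ps K : all (fun p => 0 < p)%N ps -> forall n, n \in Nset ps K -> (0 < n)%N.
Proof.
elim: ps => [|p ps IH] /=; first by move=> _ n; rewrite Nset_nil inE => /eqP->.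
move=> /andP[p0 hps] n; rewrite Nset_cons => /seq.allpairsP[[k m] /= [_ hm ->]].
by rewrite muln_gt0 expn_gt0 p0 (IH hps).
Qed.

Lemma Nset_ndvd ps K q : prime q -> q \notin ps -> all prime ps ->
  forall n, n \in Nset ps K -> ~~ (q %| n).
Proof.
move=> pq; elim: ps => [|p ps IH] /=.
  by move=> _ _ n; rewrite Nset_nil inE => /eqP->; rewrite dvdn1; case: eqP pq => // ->.
rewrite inE negb_or => /andP[qp qps] /andP[pp aps] n; rewrite Nset_cons => /seq.allpairsP[[k m] /= [_ hm ->]].
rewrite Euclid_dvdM // negb_or (IH qps aps m hm) andbT Euclid_dvdX //.
by rewrite negb_and (negbTE (_ : ~~ (q %| p))) // dvdn_prime2 //.
Qed.

Lemma Nset_uniq ps K : uniq ps -> all prime ps -> uniq (Nset ps K).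
Proof.
elim: ps => [|p ps IH] //= /andP[pps ups] /andP[pp aps].
rewrite Nset_cons.
apply: allpairs_uniq; [exact: rng_uniq | exact: IH |].
move=> [k m] [k' m'] /seq.allpairsP[[a b] [_ hb]] [-> ->].
move=> /seq.allpairsP[[a' b'] [_ hb']] [-> ->] E.
simpl in E, hb, hb'.
have aps0 : all (fun p => 0 < p) ps by apply: sub_all aps => x; exact: prime_gt0.
have b0 := @Nset_gt0 ps K aps0 b hb.
have b0' := @Nset_gt0 ps K aps0 b' hb'.
have cb : coprime p b by rewrite prime_coprime // (@Nset_ndvd ps K p pp pps aps b hb).
have cb' : coprime p b' by rewrite prime_coprime // (@Nset_ndvd ps K p pp pps aps b' hb').
have Ea : a = a'.
  have := congr1 (logn p) E.
  have p0 := prime_gt0 pp.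
  rewrite !lognM ?expn_gt0 ?p0 // (logn_coprime cb) (logn_coprime cb') !addn0 !pfactorK //.
move: E; rewrite Ea => /eqP; rewrite eqn_pmul2l ?expn_gt0 ?prime_gt0 // => /eqP->.
by [].
Qed.

Lemma Nset_cover ps K : all prime ps -> forall n, (0 < n)%N ->
  (forall q, prime q -> q %| n -> q \in ps) -> (forall q, logn q n <= K)%N ->
  n \in Nset ps K.
Proof.
elim: ps => [|p ps IH] /= => [_ n n0 hq hK|/andP[pp aps] n n0 hq hK].
  rewrite Nset_nil inE; apply/negPn/negP => n1.
  have n1' : (1 < n)%N by rewrite ltn_neqAle eq_sym n1 n0.
  by have := hq _ (pdiv_prime n1') (pdiv_dvd n); rewrite in_nil.
have [m cm En] := pfactor_coprime pp n0.
have m0 : (0 < m)%N by move: n0; rewrite En muln_gt0 => /andP[].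
rewrite Nset_cons; apply/seq.allpairsP; exists (logn p n, m) => /=; split.
- by rewrite mem_rng hK.
- apply: IH => //.
  + move=> q qq qm.
    have : q \in p :: ps by apply: hq => //; rewrite En dvdn_mulr.
    rewrite inE => /orP[/eqP qp|//].
    by move: cm; rewrite -qp prime_coprime // qm.
  + move=> q; apply: leq_trans (hK q); apply: dvdn_leq_log => //.
    by rewrite En dvdn_mulr.
- by rewrite mulnC -En.
Qed.

Lemma logn_leq_n q n : (logn q n <= n)%N.
Proof.
case: (posnP n) => [->|n0]; first by rewrite logn0.
case: (ltnP 1 q) => q1.
  apply: leq_trans (ltnW (ltn_expl (logn q n) q1)) _.
  exact: dvdn_leq (pfactor_dvdnn q n).
by rewrite lognE; case: (prime q) (prime_gt1 (p:=q)) => // /(_ isT); rewrite ltnNge q1.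
Qed.

Local Open Scope ring_scope.

Lemma rngE K : rng K = index_iota 0 K.+1.
Proof. by rewrite /index_iota subn0. Qed.

Section RealPart.
Variable R : realType.

Lemma sum_sub_le (s t : seq nat) (F : nat -> R) : uniq s -> uniq t ->
  {subset s <= t} -> (forall x, x \in t -> 0 <= F x) ->
  \sum_(x <- s) F x <= \sum_(x <- t) F x.
Proof.
move=> us ut st F0.
rewrite [in X in _ <= X](bigID (fun x => x \in s)) /=.
have -> : \sum_(i <- t | i \in s) F i = \sum_(x <- s) F x.
  rewrite -big_filter.
  apply: perm_big; apply: uniq_perm; rewrite ?filter_uniq //.
  by move=> x; rewrite mem_filter; case: (boolP (x \in s)) => // /st ->.
rewrite lerDl big_seq_cond sumr_ge0 // => i /andP[it _]; exact: F0.
Qed.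

Lemma Nset_sum (g : nat -> R) ps K : g 1%N = 1 ->
  (forall m n, (0 < m)%N -> (0 < n)%N -> g (m * n)%N = g m * g n) ->
  all (fun p => 0 < p)%N ps ->
  \sum_(n <- Nset ps K) g n = \prod_(p <- ps) \sum_(k <- rng K) g (p ^ k)%N.
Proof.
move=> g1 gM; elim: ps => [|p ps IH] /= => [_|/andP[p0 aps]].
  by rewrite Nset_nil big_seq1 big_nil.
rewrite Nset_cons big_allpairs_dep big_cons -IH // mulr_suml.
apply: eq_bigr => k _; rewrite mulr_sumr big_seq [in RHS]big_seq.
apply: eq_bigr => m hm; apply: gM; first by rewrite expn_gt0 p0.
exact: Nset_gt0 aps _ hm.
Qed.

Lemma geom_k (f : R) K : 0 <= f -> f < 1 ->
  \sum_(k <- rng K) k%:R * f ^+ k <= f / (1 - f) * \sum_(k <- rng K) f ^+ k.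
Proof.
move=> f0 f1; rewrite rngE.
have key : (1 - f) * \sum_(0 <= k < K.+1) k%:R * f ^+ k =
    \sum_(0 <= k < K.+1) f ^+ k - 1 - K%:R * f ^+ K.+1.
  elim: K => [|K IH]; first by rewrite big_nat1 big_nat1 /= !mul0r expr0; lra.
  rewrite big_nat_recr //= mulrDr IH [in RHS]big_nat_recr //= !exprS -!natr1.
  ring.
have fpos : 0 < 1 - f by lra.
rewrite -(ler_pM2l fpos) key mulrA mulrCA divff ?mulr1; last by lra.
have geo : (1 - f) * \sum_(0 <= k < K.+1) f ^+ k = 1 - f ^+ K.+1.
  elim: K {key} => [|K IH]; first by rewrite big_nat1 expr0 expr1; lra.
  rewrite big_nat_recr //= mulrDr IH !exprS; ring.
have : 0 <= K%:R * f ^+ K.+1 by rewrite mulr_ge0 // exprn_ge0.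
have : 0 <= f ^+ K.+1 by rewrite exprn_ge0.
nra.
Qed.

Lemma expR_le1 (x a : R) : 0 <= x -> x <= a -> a < 1 ->
  expR x <= 1 + (1 - a)^-1 * x.
Proof.
move=> x0 xa a1.
have h1 := expR_ge1Dx (- x); have h2 := expR_ge1Dx (- a).
rewrite expRN in h1; rewrite expRN in h2.
have ex := expR_gt0 x; have ea := expR_gt0 a.
have hx : expR x * (1 - x) <= 1.
  by move: h1; rewrite -(ler_pM2l ex) mulfV ?gt_eqF.
have ha : expR a * (1 - a) <= 1.
  by move: h2; rewrite -(ler_pM2l ea) mulfV ?gt_eqF.
have exa : expR x <= expR a by rewrite ler_expR.
have c0 : 0 < 1 - a by lra.
have hc : expR a <= (1 - a)^-1 by rewrite -(ler_pM2r c0) mulVf ?gt_eqF.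
nra.
Qed.

Lemma sum_cond_le (r : seq nat) (P : pred nat) (F : nat -> R) :
  (forall k, 0 <= F k) -> \sum_(k <- r | P k) F k <= \sum_(k <- r) F k.
Proof.
move=> F0; rewrite [in X in _ <= X](bigID P) /= lerDl; exact: sumr_ge0.
Qed.

Lemma prime_bound (f lp a T : R) K : 0 <= f -> f < 1 -> 0 < lp -> 0 <= a ->
  0 < T -> a * T < 1 ->
  \sum_(k <- rng K) f ^+ k * expR (k%:R * a * lp) <=
  (\sum_(k <- rng K) f ^+ k) *
   expR ((1 - a * T)^-1 * a * lp * (f / (1 - f)) +
         \sum_(k <- rng K | T < k%:R * lp) f ^+ k * expR (k%:R * a * lp)).
Proof.
move=> f0 f1 lp0 a0 T0 aT1.
set S := \sum_(k <- rng K) f ^+ k.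
set B := \sum_(k <- rng K | T < k%:R * lp) f ^+ k * expR (k%:R * a * lp).
set c := (1 - a * T)^-1.
have c0 : 0 <= c by rewrite invr_ge0; lra.
have S1 : 1 <= S.
  rewrite /S rngE big_nat_recl // expr0 lerDl; apply: sumr_ge0 => i _.
  exact: exprn_ge0.
have B0 : 0 <= B by apply: sumr_ge0 => i _; apply: mulr_ge0; rewrite ?exprn_ge0 ?expR_ge0.
have small : \sum_(k <- rng K | ~~ (T < k%:R * lp)) f ^+ k * expR (k%:R * a * lp)
    <= S + c * a * lp * \sum_(k <- rng K) k%:R * f ^+ k.
  apply: le_trans (_ : \sum_(k <- rng K | ~~ (T < k%:R * lp))
                  (f ^+ k + c * a * lp * (k%:R * f ^+ k)) <= _).
    apply: ler_sum => k; rewrite -leNgt => kT.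
    have fk0 : 0 <= f ^+ k by exact: exprn_ge0.
    have x0 : 0 <= k%:R * a * lp by apply: mulr_ge0; [apply: mulr_ge0|lra].
    have xa : k%:R * a * lp <= a * T.
      by rewrite mulrAC [a * T]mulrC; apply: ler_wpM2r.
    have := @expR_le1 _ _ x0 xa aT1; rewrite -/c => h.
    apply: le_trans (_ : f ^+ k * (1 + c * (k%:R * a * lp)) <= _).
      by rewrite ler_wpM2l.
    have -> : f ^+ k + c * a * lp * (k%:R * f ^+ k) = f ^+ k * (1 + c * (k%:R * a * lp)) by ring.
    by [].
  rewrite big_split /= -mulr_sumr; apply: lerD.
    by apply: sum_cond_le => k; exact: exprn_ge0.
  apply: ler_wpM2l; first by apply: mulr_ge0; [apply: mulr_ge0|lra].
  by apply: sum_cond_le => k; apply: mulr_ge0; rewrite ?exprn_ge0.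
have geo := @geom_k f K f0 f1.
rewrite (bigID (fun k => T < k%:R * lp)) /= -/B.
set D := c * a * lp * (f / (1 - f)) + B.
have D0 : 0 <= D.
  apply: addr_ge0 => //; apply: mulr_ge0; [apply: mulr_ge0; [apply: mulr_ge0|lra]|] => //.
  by apply: divr_ge0 => //; rewrite subr_ge0 ltW.
apply: le_trans (_ : S * (1 + D) <= _); last first.
  by rewrite ler_wpM2l ?expR_ge1Dx //; lra.
have cal0 : 0 <= c * a * lp by apply: mulr_ge0; [apply: mulr_ge0|lra].
have h3 := ler_wpM2l cal0 geo.
have h1 : B <= S * B by nra.
have h2 : S * (1 + D) = S + S * B + c * a * lp * (f / (1 - f) * S) by rewrite /D; ring.
rewrite h2; move: h3; rewrite -/S => h3; lra.
Qed.
End RealPart.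

Section Core.
Variable R : realType.

Lemma cm_pow (g : nat -> R) : completely_multiplicative g ->
  forall p k, (0 < p)%N -> g (p ^ k)%N = g p ^+ k.
Proof.
move=> [g1 gM] p k p0; elim: k => [|k IH]; first by rewrite expn0 expr0.
by rewrite expnS gM ?expn_gt0 ?p0 // IH exprS.
Qed.

Lemma powR_natE (p : nat) (x : R) : (0 < p)%N ->
  (p%:R : R) `^ x = expR (x * ln (p%:R : R)).
Proof. by move=> p0; rewrite /powR pnatr_eq0 eqn0Ngt p0. Qed.

Lemma powR_natX (p k : nat) (a : R) : (0 < p)%N ->
  ((p ^ k)%N%:R : R) `^ a = expR (k%:R * a * ln (p%:R : R)).
Proof.
move=> p0; rewrite powR_natE ?expn_gt0 ?p0 // natrX lnXn ?ltr0n //.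
by congr expR; rewrite -mulr_natr; ring.
Qed.


Lemma core (g : nat -> R) (yy : R) (M : nat) :
  completely_multiplicative g -> (forall n, 0 <= g n) ->
  (forall p, prime p -> g p < 1) ->
  1 < ln (ln yy) ->
  \sum_(0 <= p < M.+1 | prime p) ln (p%:R : R) * (g p / (1 - g p))
     <= ln yy - ln yy / ln (ln yy) ->
  \sum_(0 <= p < M.+1 | prime p)
     \sum_(1 <= k < M.+1 | ln yy / (ln (ln yy)) ^+ 4 < k%:R * ln (p%:R : R))
        (g p ^+ k * (p%:R : R) `^ (k%:R * alpha_param yy)) <= 1 ->
  \sum_(n <- Nset [seq p <- rng M | prime p] M | yy < n%:R) g n <=
  expR (2 - ln (ln yy)) * \sum_(n <- Nset [seq p <- rng M | prime p] M) g n.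
Proof.
move=> gcm g0 glt1 l1 hmu heta.
have [g1 gM] := gcm.
have L1 : 1 < ln yy.
  by rewrite ltNge; apply/negP => /ln_le0 h; move: l1; rewrite ltNge (le_trans h) ?ler01.
have yy1 : 1 < yy.
  by rewrite ltNge; apply/negP => /ln_le0 h; move: L1; rewrite ltNge (le_trans h) ?ler01.
set L := ln yy in L1 hmu heta *.
set l := ln L in l1 hmu heta *.
have l0 : 0 < l by lra.
have L0 : 0 < L by lra.
set a := alpha_param yy in heta *.
have aE : a = l ^+ 2 / L by [].
set T := L / l ^+ 4 in heta *.
have a0 : 0 <= a by rewrite aE divr_ge0 ?exprn_ge0 // ltW.
have T0 : 0 < T by rewrite divr_gt0 // exprn_gt0.
have aT : a * T = (l ^+ 2)^-1 by rewrite aE /T; field; rewrite ?gt_eqF.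
have l21 : 1 < l ^+ 2 by rewrite -[1](expr1n _ 2) ltrXn2r // ltW.
have aT1 : a * T < 1 by rewrite aT invf_lt1 // (lt_trans ltr01).
set c := (1 - a * T)^-1.
set ps := [seq p <- rng M | prime p].
set N := Nset ps M.
have psP : all prime ps by apply: filter_all.
have ps0 : all (fun p => 0 < p)%N ps by apply: sub_all psP => x; exact: prime_gt0.
have yy0 : 0 < yy by lra.
(* Rankin *)
have R1 : (\sum_(n <- N | yy < n%:R) g n) * yy `^ a <=
          \sum_(n <- N) g n * (n%:R : R) `^ a.
  rewrite mulr_suml.
  apply: le_trans (_ : \sum_(n <- N | yy < n%:R) g n * (n%:R : R) `^ a <= _).
    apply: ler_sum => n hn; apply: (ler_wpM2l (g0 n)).
    by apply: ge0_ler_powR => //; rewrite ?nnegrE ?ler0n ?ltW.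
  by apply: sum_cond_le => n; apply: mulr_ge0 => //; exact: powR_ge0.
have R2 : \sum_(n <- N) g n * (n%:R : R) `^ a =
   \prod_(p <- ps) \sum_(k <- rng M) g p ^+ k * expR (k%:R * a * ln (p%:R : R)).
  rewrite (@Nset_sum R (fun n => g n * (n%:R : R) `^ a)) //.
  - rewrite big_seq [in RHS]big_seq; apply: eq_bigr => p hp.
    have p0 : (0 < p)%N by move/allP: ps0 => /(_ p hp).
    by apply: eq_bigr => k _; rewrite cm_pow // powR_natX.
  - by rewrite g1 powR1 mulr1.
  - move=> m n m0 n0; rewrite gM // natrM powRM ?ler0n //; ring.
have R3 : \sum_(n <- N) g n = \prod_(p <- ps) \sum_(k <- rng M) g p ^+ k.
  rewrite (@Nset_sum R g) //.
  rewrite big_seq [in RHS]big_seq; apply: eq_bigr => p hp.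
  have p0 : (0 < p)%N by move/allP: ps0 => /(_ p hp).
  by apply: eq_bigr => k _; rewrite cm_pow.
set B := fun p : nat => \sum_(k <- rng M | T < k%:R * ln (p%:R : R))
           g p ^+ k * expR (k%:R * a * ln (p%:R : R)).
set d := fun p : nat => c * a * ln (p%:R : R) * (g p / (1 - g p)) + B p.
have R4 : \prod_(p <- ps) \sum_(k <- rng M) g p ^+ k * expR (k%:R * a * ln (p%:R : R))
    <= (\prod_(p <- ps) \sum_(k <- rng M) g p ^+ k) * expR (\sum_(p <- ps) d p).
  rewrite expR_sum -big_split /= big_seq [X in _ <= X]big_seq.
  apply: ler_prod => p hp; apply/andP; split.
    by apply: sumr_ge0 => k _; apply: mulr_ge0; rewrite ?exprn_ge0 ?expR_ge0.
  have pp : prime p by move/allP: psP => /(_ p hp).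
  apply: prime_bound => //; first exact: glt1.
  by apply: ln_gt0; rewrite ltr1n prime_gt1.
have R5 : \sum_(p <- ps) d p <= c * a * (L - L / l) + 1.
  rewrite /d big_split /=; apply: lerD.
    under eq_bigr do rewrite -mulrA.
    rewrite -mulr_sumr; apply: ler_wpM2l.
      by apply: mulr_ge0 => //; rewrite invr_ge0; lra.
    by rewrite big_filter rngE.
  apply: le_trans heta; rewrite big_filter rngE; apply: ler_sum => p pp.
  have p0 : (0 < p)%N by exact: prime_gt0.
  rewrite /B rngE big_ltn_cond // ifN; last first.
    by rewrite mul0r -leNgt ltW.
  rewrite le_eqVlt; apply/orP; left; apply/eqP.
  by apply: eq_bigr => k _; rewrite powR_natE // mulrA.
have ya : yy `^ a = expR (l ^+ 2).
  by rewrite /powR gt_eqF //; congr expR; rewrite aE -/L; field; rewrite gt_eqF.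
have l2p : 0 < l ^+ 2 - 1 by lra.
have cE : c = l ^+ 2 / (l ^+ 2 - 1).
  by rewrite /c aT; field; rewrite ?gt_eqF // subr_eq0 gt_eqF.
have aL : a * (L - L / l) = l ^+ 2 - l.
  by rewrite aE; field; rewrite ?gt_eqF.
have Hc : c * a * (L - L / l) <= l ^+ 2 - l + 1.
  rewrite -mulrA aL cE mulrAC ler_pdivrMr //; nra.
have main : (\sum_(n <- N | yy < n%:R) g n) * expR (l ^+ 2) <=
            (\sum_(n <- N) g n) * expR (l ^+ 2 - l + 2).
  rewrite -ya; apply: le_trans R1 _; rewrite R2 R3; apply: le_trans R4 _.
  apply: ler_wpM2l; first by rewrite -R3; apply: sumr_ge0 => n _.
  by rewrite ler_expR; lra.
rewrite (_ : l ^+ 2 - l + 2 = (2 - l) + l ^+ 2) in main; last by ring.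
rewrite expRD mulrA [_ * expR (2 - l)]mulrC in main.
by rewrite -(ler_pM2r (expR_gt0 (l ^+ 2))).
Qed.
End Core.

Section Fixed.
Variable R : realType.

Lemma near_ge (P : nat -> Prop) (Y : nat) :
  (forall M, (Y <= M)%N -> P M) -> \forall M \near \oo, P M.
Proof. by move=> h; exists Y => //; move=> M /= hM; exact: h. Qed.

Lemma fixed_i (g : nat -> R) (yy : R) :
  completely_multiplicative g -> (forall n, 0 <= g n) ->
  (forall p, prime p -> g p < 1) ->
  1 < ln (ln yy) -> expR (2 - ln (ln yy)) <= 1 / 2 ->
  (forall M, \sum_(0 <= p < M.+1 | prime p) ln (p%:R : R) * (g p / (1 - g p))
     <= ln yy - ln yy / ln (ln yy)) ->
  (forall M, \sum_(0 <= p < M.+1 | prime p)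
     \sum_(1 <= k < M.+1 | ln yy / (ln (ln yy)) ^+ 4 < k%:R * ln (p%:R : R))
        (g p ^+ k * (p%:R : R) `^ (k%:R * alpha_param yy)) <= 1) ->
  let F := (\sum_(1 <= n <oo) (g n)%:E)%E in
  let A := (\sum_(1 <= n <oo | (n%:R <= yy)%R) (g n)%:E)%E in
  [/\ A \is a fin_num, F \is a fin_num, 0 < fine F &
     `|fine A / fine F - 1| <= 2 * expR (2 - ln (ln yy))].
Proof.
move=> gcm g0 glt1 l1 dhalf hmu heta F A.
have [g1 gM] := gcm.
have L1 : 1 < ln yy.
  by rewrite ltNge; apply/negP => /ln_le0 h; move: l1; rewrite ltNge (le_trans h) ?ler01.
have yy1 : 1 < yy.
  by rewrite ltNge; apply/negP => /ln_le0 h; move: L1; rewrite ltNge (le_trans h) ?ler01.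
set d := expR (2 - ln (ln yy)).
have d0 : 0 <= d by exact: expR_ge0.
have [Y hY] : exists Y : nat, yy < Y%:R by exists (Num.truncn yy).+1; exact: truncnS_gt.
have Y1 : (1 < Y)%N by rewrite -(ltr_nat R); lra.
set Ar := \sum_(1 <= n < Y | n%:R <= yy) g n.
have Ar1 : 1 <= Ar.
  rewrite /Ar big_ltn_cond // ifT; last by rewrite ltW.
  by rewrite g1 lerDl; apply: sumr_ge0 => n _.
have hA : A = Ar%:E.
  rewrite /A; apply: lim_near_cst => //; apply: (@near_ge _ Y) => M YM.
  rewrite sumEFin (big_cat_nat (n := Y)) //= ?(ltnW Y1) // [X in _ + X]big_nat_cond.
  rewrite [X in _ + X]big1 ?addr0 //.
  by move=> n /andP[/andP[Yn _]]; rewrite leNgt (lt_le_trans hY) // ler_nat.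
have perM : forall M, \sum_(1 <= n < M.+1) g n <= Ar + 2 * d * Ar /\
                      \sum_(1 <= n < M.+1) g n <= 2 * Ar.
  move=> M.
  set ps := [seq p <- rng M | prime p].
  set N := Nset ps M.
  have psP : all prime ps by apply: filter_all.
  have ps0 : all (fun p => 0 < p)%N ps by apply: sub_all psP => x; exact: prime_gt0.
  have uN : uniq N by apply: Nset_uniq => //; rewrite filter_uniq // rng_uniq.
  have Npos : forall n, n \in N -> (0 < n)%N by exact: Nset_gt0.
  have hcore := @core R g yy M gcm g0 glt1 l1 (hmu M) (heta M).
  rewrite -/ps -/N -/d in hcore.
  set P := \sum_(n <- N) g n.
  have lowP : \sum_(n <- N | ~~ (yy < n%:R)) g n <= Ar.
    rewrite -big_filter /Ar -[\sum_(1 <= n < Y | _) _]big_filter; apply: sum_sub_le.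
    - by rewrite filter_uniq.
    - by rewrite filter_uniq // iota_uniq.
    - move=> n; rewrite !mem_filter -leNgt => /andP[ny nN]; rewrite ny /=.
      rewrite mem_index_iota Npos //=; rewrite -(ltr_nat R); lra.
    - by move=> n _.
  have hP : P <= Ar + d * P.
    have sp : P = \sum_(n <- N | yy < n%:R) g n + \sum_(n <- N | ~~ (yy < n%:R)) g n.
      by rewrite /P (bigID (fun n => yy < n%:R)).
    move: hcore; rewrite -/P => hcore; lra.
  have P0 : 0 <= P by apply: sumr_ge0 => n _.
  have P2 : P <= 2 * Ar.
    have h12 : 0 <= 1 / 2 - d by move: dhalf; rewrite -/d; lra.
    have := mulr_ge0 h12 P0. lra.
  have cover : {subset index_iota 1 M.+1 <= N}.
    move=> n; rewrite mem_index_iota => /andP[n0 nM].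
    apply: Nset_cover => //.
    + move=> q qq qn; rewrite mem_filter qq mem_rng.
      by apply: leq_trans (dvdn_leq n0 qn) _; rewrite -ltnS.
    + by move=> q; apply: leq_trans (logn_leq_n q n) _; rewrite -ltnS.
  have hS : \sum_(1 <= n < M.+1) g n <= P.
    by apply: sum_sub_le => //; rewrite iota_uniq.
  have htail : \sum_(1 <= n < M.+1 | yy < n%:R) g n <= d * P.
    apply: le_trans hcore; rewrite -big_filter -[\sum_(n <- N | _) _]big_filter.
    apply: sum_sub_le; rewrite ?filter_uniq ?iota_uniq //.
    move=> n; rewrite !mem_filter => /andP[-> /cover] //.
  have hlow : \sum_(1 <= n < M.+1 | ~~ (yy < n%:R)) g n <= Ar.
    rewrite -big_filter /Ar -[\sum_(1 <= n < Y | _) _]big_filter; apply: sum_sub_le.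
    - by rewrite filter_uniq // iota_uniq.
    - by rewrite filter_uniq // iota_uniq.
    - move=> n; rewrite !mem_filter -leNgt => /andP[ny]; rewrite ny /=.
      rewrite !mem_index_iota => /andP[-> _] /=; rewrite -(ltr_nat R); lra.
    - by move=> n _.
  split; last exact: le_trans hS P2.
  rewrite (bigID (fun n => yy < n%:R)) /=.
  have : d * P <= d * (2 * Ar) by apply: ler_wpM2l.
  lra.
have Fge0 : forall n, (1 <= n)%N -> true -> (0 <= (g n)%:E)%E.
  by move=> n _ _; rewrite lee_fin.
have hcvg := is_cvg_nneseries Fge0.
have hFup : (F <= (Ar + 2 * d * Ar)%:E)%E.
  rewrite /F; apply: lime_le => //; apply: (@near_ge _ 1) => M.
  case: M => // M _; rewrite sumEFin lee_fin; exact: (perM M).1.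
have hFlo : (Ar%:E <= F)%E.
  apply: le_trans (nneseries_lim_ge Y Fge0).
  rewrite sumEFin lee_fin; exact: sum_cond_le.
have Ar0 : 0 <= Ar by lra.
move: hFup hFlo; case HF : F => [r| |] //= hup hlo.
rewrite lee_fin in hup; rewrite lee_fin in hlo.
have r0 : 0 < r by lra.
rewrite hA /=; split => //.
have -> : Ar / r - 1 = (Ar - r) / r by field; rewrite gt_eqF.
rewrite ler_norml; apply/andP; split.
  rewrite ler_pdivlMr //.
  have : d * Ar <= d * r by apply: ler_wpM2l.
  lra.
rewrite ler_pdivrMr //.
have : 0 <= 2 * d * r by rewrite mulr_ge0 ?mulr_ge0 // ltW.
lra.
Qed.
End Fixed.

Lemma ev_ll (R : realType) (y : nat -> R) : y @ \oo --> +oo ->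
  forall c, \forall i \near \oo, c <= ln (ln (y i)).
Proof.
move=> /cvgryPge hy c; apply: (filterS _ (hy (expR (expR c)))) => i /= hi.
have y0 : 0 < y i by apply: lt_le_trans hi; exact: expR_gt0.
have h1 : expR c <= ln (y i).
  by rewrite -[X in X <= _]expRK ler_ln // posrE expR_gt0.
have h2 : 0 < ln (y i) by apply: lt_le_trans h1; exact: expR_gt0.
by rewrite -[X in X <= _]expRK ler_ln // posrE expR_gt0.
Qed.

Theorem mainTheorem9 (R : realType) (f : nat -> nat -> R) (y : nat -> R) :
  (forall i, completely_multiplicative (f i)) ->
  (forall i n, 0 <= f i n) ->
  (forall i p, prime p -> f i p < 1) ->
  y @ \oo --> +oo ->
  (forall i,
     (\sum_(0 <= p <oo | prime p)
         ((ln (p%:R : R) * (f i p / (1 - f i p)))%:E) <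
      (ln (y i) - ln (y i) / ln (ln (y i)))%:E)%E) ->
  (fun i => (\sum_(0 <= p <oo | prime p)
               \sum_(1 <= k <oo | (ln (y i) / (ln (ln (y i))) ^+ 4
                                   < k%:R * ln (p%:R : R))%R)
                 ((f i p ^+ k * (p%:R : R) `^ (k%:R * alpha_param (y i)))%:E))%E)
    @ \oo --> 0%E ->
  exists eps : nat -> R, eps @ \oo --> 0 /\
    \forall i \near \oo,
      (\sum_(1 <= n <oo | (n%:R <= y i)%R) (f i n)%:E =
       (1 + eps i)%:E * \sum_(1 <= n <oo) (f i n)%:E)%E.
Proof.
move=> hcm hnn hlt1 hy hmu heta.
set eta := fun i => _ in heta.
have Heta : \forall i \near \oo, (eta i <= 1%:E)%E.
  have [hfin hc] := (fine_cvgP _ _).1 heta.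
  have h1 := (cvgrPdist_le _ _).1 hc 1 ltr01.
  near=> i.
  have hf : eta i \is a fin_num by near: i.
  have h : `|0 - fine (eta i)| <= 1 by near: i; exact: h1.
  rewrite sub0r normrN in h.
  by rewrite -(fineK hf) lee_fin (le_trans (ler_norm _) h).
have Hmu : forall i M, \sum_(0 <= p < M.+1 | prime p)
      ln (p%:R : R) * (f i p / (1 - f i p)) <= ln (y i) - ln (y i) / ln (ln (y i)).
  move=> i M; rewrite -lee_fin -sumEFin; apply: ltW; apply: le_lt_trans (hmu i).
  apply: nneseries_lim_ge => p _ pp; rewrite lee_fin; apply: mulr_ge0.
    by apply: ln_ge0; rewrite ler1n prime_gt0.
  by apply: divr_ge0 => //; rewrite subr_ge0 ltW // hlt1.
have Hfix : \forall i \near \oo,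
    [/\ (\sum_(1 <= n <oo | (n%:R <= y i)%R) (f i n)%:E)%E \is a fin_num,
        (\sum_(1 <= n <oo) (f i n)%:E)%E \is a fin_num,
        0 < fine (\sum_(1 <= n <oo) (f i n)%:E)%E &
        `|fine (\sum_(1 <= n <oo | (n%:R <= y i)%R) (f i n)%:E)%E /
          fine (\sum_(1 <= n <oo) (f i n)%:E)%E - 1| <= 2 * expR (2 - ln (ln (y i)))].
  near=> i.
  have l3 : 3 <= ln (ln (y i)) by near: i; exact: ev_ll hy 3.
  have he : (eta i <= 1%:E)%E by near: i.
  apply: fixed_i => //.
  - exact: hlt1.
  - by apply: lt_le_trans l3; rewrite ltr1n.
  - have h := expR_ge1Dx (ln (ln (y i)) - 2).
    have e0 := expR_gt0 (ln (ln (y i)) - 2).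
    rewrite (_ : 2 - ln (ln (y i)) = - (ln (ln (y i)) - 2)); last by ring.
    rewrite expRN div1r lef_pV2 ?posrE //; lra.
  - move=> M; rewrite -lee_fin -sumEFin; apply: le_trans he.
    apply: le_trans (nneseries_lim_ge M.+1 _); last first.
      move=> p _ pp; apply: nneseries_ge0 => k _ _; rewrite lee_fin.
      by apply: mulr_ge0; rewrite ?exprn_ge0 ?powR_ge0.
    apply: lee_sum => p pp; rewrite -sumEFin.
    apply: nneseries_lim_ge => k _ _; rewrite lee_fin.
    by apply: mulr_ge0; rewrite ?exprn_ge0 ?powR_ge0.
exists (fun i => fine (\sum_(1 <= n <oo | (n%:R <= y i)%R) (f i n)%:E)%E /
          fine (\sum_(1 <= n <oo) (f i n)%:E)%E - 1).
split; last first.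
  near=> i.
  have [hA hF hF0 _] : [/\ (\sum_(1 <= n <oo | (n%:R <= y i)%R) (f i n)%:E)%E \is a fin_num,
        (\sum_(1 <= n <oo) (f i n)%:E)%E \is a fin_num,
        0 < fine (\sum_(1 <= n <oo) (f i n)%:E)%E &
        `|fine (\sum_(1 <= n <oo | (n%:R <= y i)%R) (f i n)%:E)%E /
          fine (\sum_(1 <= n <oo) (f i n)%:E)%E - 1| <= 2 * expR (2 - ln (ln (y i)))] by near: i.
  rewrite -(fineK hA) -[in RHS](fineK hF) -EFinM; congr EFin.
  by field; rewrite gt_eqF.
apply/cvgrPdist_le => e e0.
near=> i.
have hl : Num.max 3 (2 - ln (e / 2)) <= ln (ln (y i)) by near: i; exact: ev_ll.
have [_ _ _ hb] : [/\ (\sum_(1 <= n <oo | (n%:R <= y i)%R) (f i n)%:E)%E \is a fin_num,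
        (\sum_(1 <= n <oo) (f i n)%:E)%E \is a fin_num,
        0 < fine (\sum_(1 <= n <oo) (f i n)%:E)%E &
        `|fine (\sum_(1 <= n <oo | (n%:R <= y i)%R) (f i n)%:E)%E /
          fine (\sum_(1 <= n <oo) (f i n)%:E)%E - 1| <= 2 * expR (2 - ln (ln (y i)))] by near: i.
rewrite sub0r normrN; apply: le_trans hb _.
have e2 : 0 < e / 2 by rewrite divr_gt0.
have : 2 - ln (ln (y i)) <= ln (e / 2).
  by move: hl; rewrite ge_max => /andP[_]; lra.
rewrite -ler_expR lnK ?posrE //; lra.
Unshelve. all: by end_near.
Qed.
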